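(* Let $A \in \mathbb{R}^{m \times r}$ and $C = \{ x \in \mathbb{R}^r \mid Ax \ge 0\}$. Then $C$ has only finitely many conformally non-decomposable vectors up to positive scalar multiples.
   Context: For $x \in \mathbb{R}^n$, $\operatorname{sign}(x) \in \{-,0,+\}^n$ is obtained by applying the sign function componentwise; the relations $0<-$, $0<+$ induce a componentwise partial order on $\{-,0,+\}^n$. A nonzero $x \in C$ is conformally non-decomposable if for all nonzero $x^1,x^2 \in C$ with $\operatorname{sign}(x^1),\operatorname{sign}(x^2) \le \operatorname{sign}(x)$, $x = x^1 + x^2$ implies $x^1 = \lambda x^2$ for some $\lambda > 0$. *)

(* Defs.v *)
From HB Require Import structures.
From mathcomp Require Import all_boot all_order all_algebra.
From mathcomp Require Import reals.
Set Implicit Arguments. Unset Strict Implicit. Unset Printing Implicit Defensive.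
Import Order.TTheory GRing.Theory Num.Theory.
Local Open Scope ring_scope.

Definition in_cone (R : realType) (m r : nat) (A : 'M[R]_(m, r)) (x : 'cV[R]_r) : Prop :=
  forall i : 'I_m, 0 <= (A *m x) i ord0.

(* sign(x) <= sign(y) in {-,0,+}^r with 0 < -, 0 < + componentwise:
   each component of sign(x) is 0 or equals the corresponding one of sign(y). *)
Definition sign_le (R : realType) (r : nat) (x y : 'cV[R]_r) : Prop :=
  forall i : 'I_r, Num.sg (x i ord0) = 0 \/ Num.sg (x i ord0) = Num.sg (y i ord0).

Definition conf_nondec (R : realType) (m r : nat) (A : 'M[R]_(m, r)) (x : 'cV[R]_r) : Prop :=
  in_cone A x /\ x <> 0 /\
  forall x1 x2 : 'cV[R]_r,
    in_cone A x1 -> in_cone A x2 -> x1 <> 0 -> x2 <> 0 ->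
    sign_le x1 x -> sign_le x2 x -> x = x1 + x2 ->
    exists lambda : R, 0 < lambda /\ x1 = lambda *: x2.

(* Main.v *)
Require Import Defs.
From HB Require Import structures.
From mathcomp Require Import all_boot all_order all_algebra.
From mathcomp Require Import reals.
From mathcomp Require Import ring lra.
From Stdlib Require Import Classical.
Import Order.TTheory GRing.Theory Num.Theory.
Local Open Scope ring_scope.

Lemma sgle_of (R : realType) (a b : R) :
  (b = 0 -> a = 0) -> 0 <= a * b -> Num.sg a = 0 \/ Num.sg a = Num.sg b.
Proof.
move=> hb hab.
have [->|a0] := eqVneq a 0; first by left; rewrite sgr0.
right.
have b0 : b != 0 by apply/eqP=> /hb /eqP; rewrite (negbTE a0).
case: (ltrgt0P a) a0 => ha a0; case: (ltrgt0P b) b0 => hb' b0;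
  try rewrite (gtr0_sg ha); try rewrite (ltr0_sg ha);
  try rewrite (gtr0_sg hb'); try rewrite (ltr0_sg hb'); try done; try nra.
all: by move: a0 b0; rewrite ?ha ?hb' eqxx ?andbF.
Qed.

Lemma exists_small (R : realType) (s : seq R) :
  all (fun v => 0 < v) s -> exists t, 0 < t /\ forall v, v \in s -> t <= v.
Proof.
elim: s => [|a s IH] /=.
  by move=> _; exists 1; split => //.
case/andP => ha /IH [t [t0 ht]].
exists (Order.min a t); split; first by rewrite lt_min ha t0.
move=> v; rewrite in_cons => /orP [/eqP ->|hv]; rewrite ge_min.
  by rewrite lexx.
by rewrite (ht v hv) orbT.
Qed.

Lemma finite_reps (T : eqType) (K : finType) (P : T -> Prop) (k : T -> K)
  (rel : T -> T -> Prop) :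
  (forall x y, P x -> P y -> k x = k y -> rel x y) ->
  exists s : seq T, forall x, P x -> exists2 y, y \in s & rel x y.
Proof.
move=> H.
suff: forall l : seq K, exists s : seq T, forall x, P x -> k x \in l ->
   exists2 y, y \in s & rel x y.
  case/(_ (enum K)) => s hs; exists s => x Px; apply: hs => //.
  by rewrite mem_enum.
elim=> [|a l [s hs]]; first by exists [::].
case: (classic (exists x0, P x0 /\ k x0 = a)) => [[x0 [Px0 kx0]]|nex].
  exists (x0 :: s) => x Px; rewrite in_cons => /orP [/eqP kx|kl].
    by exists x0; [rewrite in_cons eqxx | apply: H => //; rewrite kx kx0].
  by have [y ys ry] := hs x Px kl; exists y => //; rewrite in_cons ys orbT.
exists s => x Px; rewrite in_cons => /orP [/eqP kx|kl]; last exact: hs.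
by exfalso; apply: nex; exists x.
Qed.

Lemma entryBZ (R : realType) (n : nat) (M N : 'cV[R]_n) (a : R) j :
  (M - a *: N) j ord0 = M j ord0 - a * N j ord0.
Proof. by rewrite !mxE. Qed.

Lemma entryZ (R : realType) (n : nat) (N : 'cV[R]_n) (a : R) j :
  (a *: N) j ord0 = a * N j ord0.
Proof. by rewrite !mxE. Qed.

Definition key {R : realType} {m r : nat} (A : 'M[R]_(m, r)) (x : 'cV[R]_r) :=
  ([ffun i => (0 < x i ord0, x i ord0 < 0)], [ffun j => (A *m x) j ord0 == 0]).

Lemma parallel (R : realType) (m r : nat) (A : 'M[R]_(m, r)) (x y : 'cV[R]_r) :
  conf_nondec A x -> conf_nondec A y -> key A x = key A y ->
  exists lambda : R, 0 < lambda /\ x = lambda *: y.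
Proof.
move=> [cx [x0 ndx]] [cy [y0 _]] hk.
have hki : forall i, (0 < x i ord0) = (0 < y i ord0) /\ (x i ord0 < 0) = (y i ord0 < 0).
  move=> i; have := congr1 (fun p : {ffun _ -> bool * bool} * {ffun _ -> bool} => p.1 i) hk; rewrite /= !ffunE.
  by case=> -> ->.
have hkj : forall j, ((A *m x) j ord0 == 0) = ((A *m y) j ord0 == 0).
  by move=> j; have := congr1 (fun p : {ffun _ -> bool * bool} * {ffun _ -> bool} => p.2 j) hk; rewrite /= !ffunE.
have F1 : forall i, x i ord0 = 0 -> y i ord0 = 0.
  move=> i hx; have [h1 h2] := hki i; move: h1 h2; rewrite hx ltxx => h1 h2.
  by apply/eqP; case: (ltrgt0P (y i ord0)) h1 h2.
have F2 : forall i, x i ord0 != 0 -> 0 < x i ord0 * y i ord0.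
  move=> i hx; have [h1 h2] := hki i.
  case: (ltrgt0P (x i ord0)) hx h1 h2 => // hxi hx h1 h2.
  - by rewrite mulr_gt0 // -h1.
  - by rewrite -mulrNN mulr_gt0 // oppr_gt0 // -h2.
have F3 : forall i, 0 <= x i ord0 * y i ord0.
  move=> i; have [/eqP h|h] := eqVneq (x i ord0) 0.
    by rewrite (eqP h) mul0r.
  exact: ltW (F2 i h).
pose bi i := if x i ord0 == 0 then 1 else (x i ord0) ^+ 2 / (x i ord0 * y i ord0).
pose bj j := if (A *m x) j ord0 == 0 then 1 else (A *m x) j ord0 / (A *m y) j ord0.
have G2 : forall j, (A *m x) j ord0 != 0 ->
    0 < (A *m x) j ord0 /\ 0 < (A *m y) j ord0.
  move=> j hj; split; rewrite lt_def ?hj ?cx //.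
  by rewrite -hkj hj cy.
have hall : all (fun v => 0 < v)
  ([seq bi i | i <- enum 'I_r] ++ [seq bj j | j <- enum 'I_m]).
  rewrite all_cat; apply/andP; split; apply/allP => v /mapP [k _ ->].
    rewrite /bi; case: ifPn => // hk'.
    by rewrite divr_gt0 // ?F2 // exprn_even_gt0.
  rewrite /bj; case: ifPn => // hk'; have [h1 h2] := G2 k hk'.
  by rewrite divr_gt0.
have [t [t0 ht]] := @exists_small R _ hall.
have hbi : forall i, t <= bi i.
  by move=> i; apply: ht; rewrite mem_cat; apply/orP; left; apply: map_f; rewrite mem_enum.
have hbj : forall j, t <= bj j.
  by move=> j; apply: ht; rewrite mem_cat; apply/orP; right; apply: map_f; rewrite mem_enum.
have cty : in_cone A (t *: y).
  by move=> j; rewrite -scalemxAr entryZ mulr_ge0 // ltW.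
have sty : sign_le (t *: y) x.
  move=> i; apply: sgle_of; rewrite mxE.
    by move/F1 ->; rewrite mulr0.
  by have := F3 i; nra.
have ty0 : t *: y <> 0.
  by move/eqP; rewrite scaler_eq0 (gt_eqF t0) /=; apply/negP/eqP.
have c1 : in_cone A (x - t *: y).
  move=> j; rewrite mulmxBr -scalemxAr entryBZ subr_ge0.
  have := hbj j; rewrite /bj; case: ifPn => [/eqP h|h].
    by move=> _; move: (hkj j); rewrite h eqxx => /esym/eqP ->; rewrite mulr0.
  by have [h1 h2] := G2 j h; rewrite ler_pdivlMr.
have s1 : sign_le (x - t *: y) x.
  move=> i; apply: sgle_of; rewrite !mxE.
    by move=> h; rewrite h (F1 _ h) mulr0 subr0.
  have := hbi i; rewrite /bi; case: ifPn => [/eqP h|h].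
    by move=> _; rewrite h mulr0.
  rewrite ler_pdivlMr ?F2 // => hh.
  have -> : (x i ord0 - t * y i ord0) * x i ord0 =
            x i ord0 ^+ 2 - t * (x i ord0 * y i ord0) by ring.
  by rewrite subr_ge0.
have [/eqP h|h] := eqVneq (x - t *: y) 0.
  by exists t; split => //; apply/eqP; rewrite -subr_eq0 h.
have [l [l0 hl]] := ndx (x - t *: y) (t *: y) c1 cty (fun e => (negP h) (introT eqP e))
   ty0 s1 sty (esym (subrK _ _)).
exists (l * t + t); split; first by rewrite addr_gt0 // mulr_gt0.
by rewrite scalerDl -scalerA -hl subrK.
Qed.

Theorem proposition3 (R : realType) (m r : nat) (A : 'M[R]_(m, r)) :
  exists s : seq 'cV[R]_r,
    forall x : 'cV[R]_r, conf_nondec A x ->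
      exists2 y, y \in s & exists lambda : R, 0 < lambda /\ x = lambda *: y.
Proof.
apply: (@finite_reps _ _ (conf_nondec A) (key A)).
exact: parallel.
Qed.
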